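(* Let $k$ be a perfect field of characteristic $p>2$, $N\ge2$ with $p\nmid N+1$, let $\eta\in W_2(k)$ and $\lambda=\eta\bmod p\in k$. If $\mathbb{HD}^{p-1}_{N+1}(\lambda)\ne0$, then $\mathbb{HD}^{2p-1}_{N+1}(\eta)$ is invertible in $W_2(k)$, so the fraction $\mathbb{HD}^{p-1}_{N+1}(\eta)/\mathbb{HD}^{2p-1}_{N+1}(\eta)\in W_2(k)$ is well defined, and it depends only on $\lambda$.
   Context: $\mathbb{HD}^P_M(X)=\sum_{i=0}^{[P/M]}c_i(-M)^{P-iM}X^{iM}\in\mathbb{Z}[X]$ with $c_i=\binom{P}{i}\binom{P-i}{i}\cdots\binom{P-(M-1)i}{i}$ (the Hasse--Dwork polynomial), evaluated in $k$ or $W_2(k)$. *)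

(* Defs.v *)
(* Witt vectors of length 2 over a field k of characteristic p,
   represented concretely as pairs of Witt components (a0, a1). *)
From HB Require Import structures.
From mathcomp Require Import all_boot all_order all_algebra.
Set Implicit Arguments. Unset Strict Implicit. Unset Printing Implicit Defensive.
Import Order.TTheory GRing.Theory Num.Theory.
Local Open Scope ring_scope.

Section W2.
Variables (k : fieldType) (p : nat).

Definition W2 := (k * k)%type.

Definition w2zero : W2 := (0, 0).
Definition w2one : W2 := (1, 0).

(* Witt addition: S_1(a,b) = a1 + b1 + (a0^p + b0^p - (a0+b0)^p)/p *)
Definition w2add (x y : W2) : W2 :=
  (x.1 + y.1,
   x.2 + y.2 - \sum_(1 <= i < p) ('C(p, i) %/ p)%:R * x.1 ^+ i * y.1 ^+ (p - i)).

Definition w2mul (x y : W2) : W2 :=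
  (x.1 * y.1, x.1 ^+ p * y.2 + y.1 ^+ p * x.2).

(* Witt negation; componentwise negation is correct for odd p *)
Definition w2opp (x : W2) : W2 := (- x.1, - x.2).

Definition w2nat (n : nat) : W2 := iter n (w2add w2one) w2zero.

Definition w2exp (x : W2) (n : nat) : W2 := iter n (w2mul x) w2one.

Definition w2sign (e : nat) : W2 := if odd e then w2opp w2one else w2one.

Definition w2unit (x : W2) : Prop := exists u : W2, w2mul x u = w2one.

End W2.

Definition HD_coef (P M i : nat) : nat := \prod_(j < M) 'C(P - j * i, i).

Definition HDk (k : fieldType) (P M : nat) (x : k) : k :=
  \sum_(i < (P %/ M).+1)
     (HD_coef P M i)%:R * (- (M%:R)) ^+ (P - i * M) * x ^+ (i * M).

Definition HDW (k : fieldType) (p P M : nat) (x : W2 k) : W2 k :=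
  foldr (@w2add k p) (@w2zero k)
    [seq @w2mul k p (@w2sign k (P - i * M))
        (@w2mul k p (@w2nat k p (HD_coef P M i * M ^ (P - i * M))) (@w2exp k p x (i * M)))
     | i <- iota 0 (P %/ M).+1].

Definition perfect_field (k : fieldType) (p : nat) : Prop :=
  forall x : k, exists y : k, y ^+ p = x.

(* Main.v *)
Require Import Defs.
From HB Require Import structures.
From mathcomp Require Import all_boot all_order all_algebra.
From mathcomp Require Import ring zify.
Import GRing.Theory.
Local Open Scope ring_scope.

Lemma binp (k : fieldType) p (hchar : p \in [pchar k]) n i :
  (i < p)%N -> 'C(n + p, i)%:R = 'C(n, i)%:R :> k.
Proof.
elim: n i => [|n IH] [|i] hi; rewrite ?bin0 //.
  by rewrite add0n bin_lt_pcharf_0 // bin0n.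
rewrite addSn !binS !natrD IH ?IH //; exact: ltnW.
Qed.

Lemma HD_coef_big P M i : (0 < M)%N -> (P < i * M)%N -> HD_coef P M i = 0%N.
Proof.
case: M => [//|M] _ h; rewrite /HD_coef big_ord_recr /= bin_small ?muln0 //.
lia.
Qed.

Lemma HD_coef_cong (k : fieldType) p (hchar : p \in [pchar k]) M i :
  (i < p)%N ->
  (HD_coef (2 * p).-1 M i)%:R = (HD_coef p.-1 M i)%:R :> k.
Proof.
move=> hip.
have hp0 : (0 < p)%N by apply: prime_gt0; apply: pcharf_prime hchar.
have key : forall j, (j * i <= p.-1)%N ->
    'C((2 * p).-1 - j * i, i)%:R = 'C(p.-1 - j * i, i)%:R :> k.
  move=> j hj; have -> : ((2 * p).-1 - j * i = (p.-1 - j * i) + p)%N by lia.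
  exact: binp.
rewrite /HD_coef !natr_prod.
case: i hip key => [|i] hip key.
  by apply: eq_bigr => j _; rewrite !bin0.
set j0 := (p.-1 %/ i.+1)%N.
have hj0 : (j0 * i.+1 <= p.-1)%N by apply: leq_trunc_div.
case: (ltnP j0 M) => hM.
  have z : 'C(p.-1 - j0 * i.+1, i.+1) = 0%N.
    apply: bin_small; have := ltn_pmod p.-1 (ltn0Sn i).
    rewrite {1}(divn_eq p.-1 i.+1) -/j0; lia.
  rewrite (bigD1 (Ordinal hM)) // [in RHS](bigD1 (Ordinal hM)) //=.
  by rewrite key // z !mul0r.
apply: eq_bigr => j _; apply: key.
apply: leq_trans hj0; apply: leq_mul => //; apply: ltnW; exact: leq_trans (ltn_ord j) hM.
Qed.

Definition hc (k : fieldType) P M i : k :=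
  (HD_coef P M i)%:R * (- (M%:R)) ^+ (P - i * M).

Lemma w2nat1 (k : fieldType) p n : (@w2nat k p n).1 = n%:R.
Proof. by elim: n => [|n IH] //=; rewrite IH mulrS. Qed.

Lemma w2sign1 (k : fieldType) e : (@w2sign k e).1 = (-1) ^+ e.
Proof. by rewrite /w2sign -signr_odd; case: odd; rewrite /= ?expr1 ?expr0. Qed.

Lemma w2sign2 (k : fieldType) e : (@w2sign k e).2 = 0.
Proof. by rewrite /w2sign; case: odd; rewrite /= ?oppr0. Qed.

Lemma w2exp1 (k : fieldType) p x n : (@w2exp k p x n).1 = x.1 ^+ n.
Proof. by elim: n => [|n IH] //=; rewrite IH exprS. Qed.

Lemma w2exp2 (k : fieldType) p x n :
  (@w2exp k p x n).2 = n%:R * x.1 ^+ (p * n.-1) * x.2.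
Proof.
elim: n => [|n IH]; first by rewrite /= !mul0r.
rewrite /= IH w2exp1; case: n IH => [|n] _ /=.
  by rewrite muln0 expr0 expr1n !mul0r mulr0 add0r !mul1r.
have e : x.1 ^+ (p * n.+1) = x.1 ^+ p * x.1 ^+ (p * n) by rewrite mulnS exprD.
rewrite -exprM [(n.+1 * p)%N]mulnC e [n.+2%:R]mulrS.
move: (x.1 ^+ p) (x.1 ^+ (p * n)) => A B; ring.
Qed.

Lemma foldr_fst (k : fieldType) p (s : seq (W2 k)) :
  (foldr (@w2add k p) (@w2zero k) s).1 = \sum_(x <- s) x.1.
Proof. by elim: s => [|x s IH] /=; rewrite ?big_nil ?big_cons ?IH. Qed.

Lemma foldr_rel (k : fieldType) p (I : Type) (F G : I -> W2 k) (s : seq I) :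
  (forall i, (F i).1 = (G i).1) ->
  (foldr (@w2add k p) (@w2zero k) (map F s)).2 -
  (foldr (@w2add k p) (@w2zero k) (map G s)).2 = \sum_(i <- s) ((F i).2 - (G i).2).
Proof.
move=> hFG; elim: s => [|x s IH] /=; first by rewrite big_nil subrr.
rewrite big_cons -IH !foldr_fst !big_map hFG.
have -> : \sum_(j <- s) (F j).1 = \sum_(j <- s) (G j).1 by apply: eq_bigr.
ring.
Qed.

Definition term (k : fieldType) p P M (x : W2 k) i : W2 k :=
  @w2mul k p (@w2sign k (P - i * M))
        (@w2mul k p (@w2nat k p (HD_coef P M i * M ^ (P - i * M))) (@w2exp k p x (i * M))).

Lemma hc_eq (k : fieldType) p P M i :
  hc k P M i = (@w2sign k (P - i * M)).1 * (@w2nat k p (HD_coef P M i * M ^ (P - i * M))).1.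
Proof.
rewrite w2sign1 w2nat1 /hc natrM natrX exprNn.
move: ((-1) ^+ _) (M%:R ^+ _) (_%:R) => A B C; ring.
Qed.

Lemma term1 (k : fieldType) p P M x i :
  (@term k p P M x i).1 = hc k P M i * x.1 ^+ (i * M).
Proof. by rewrite (hc_eq k p) /term /= w2exp1 mulrA. Qed.

Lemma term2 (k : fieldType) p (hchar : p \in [pchar k]) P M x y i : x.1 = y.1 ->
  (@term k p P M x i).2 - (@term k p P M y i).2 =
  (hc k P M i * (i * M)%:R * x.1 ^+ (i * M).-1) ^+ p * (x.2 - y.2).
Proof.
move=> hxy; rewrite (hc_eq k p) /term /= !w2exp1 !w2exp2 hxy w2sign2.
rewrite !exprMn -(pFrobenius_autE hchar ((i * M)%:R)) pFrobenius_aut_nat.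
rewrite -[y.1 ^+ (i * M).-1 ^+ p]exprM [((i * M).-1 * p)%N]mulnC.
move: (_.1 ^+ p) (_.1 ^+ p) (y.1 ^+ (p * _)) (y.1 ^+ (i * M) ^+ p) ((i * M)%:R) (_.2) => A B C D E F.
ring.
Qed.

Lemma hc_rel (k : fieldType) p (hchar : p \in [pchar k]) M i : (0 < M)%N -> (i < p)%N ->
  hc k (2 * p).-1 M i = - M%:R * hc k p.-1 M i.
Proof.
move=> hM hi; have hp0 : (0 < p)%N by apply: prime_gt0; apply: pcharf_prime hchar.
rewrite /hc (@HD_coef_cong k p hchar) //.
case: (leqP (i * M) p.-1) => h.
  have -> : ((2 * p).-1 - i * M = (p.-1 - i * M) + p)%N by lia.
  rewrite exprD -(pFrobenius_autE hchar) pFrobenius_autN pFrobenius_aut_nat.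
  by rewrite mulrA mulrC.
by rewrite HD_coef_big // mulr0n !mul0r mulr0.
Qed.

Lemma sum_rel (k : fieldType) p (hchar : p \in [pchar k]) M (F : nat -> k) :
  (3 <= M)%N ->
  \sum_(i <- iota 0 ((2 * p).-1 %/ M).+1) hc k (2 * p).-1 M i * F i =
  - M%:R * \sum_(i <- iota 0 (p.-1 %/ M).+1) hc k p.-1 M i * F i.
Proof.
move=> hM; have hp0 : (0 < p)%N by apply: prime_gt0; apply: pcharf_prime hchar.
have hM0 : (0 < M)%N by lia.
rewrite big_distrr.
rewrite (eq_big_seq (fun i => - M%:R * (hc k p.-1 M i * F i))); last first.
  move=> i hi; move: hi; rewrite mem_iota add0n ltnS => /andP[_ hi].
  rewrite (@hc_rel k p hchar) // ?mulrA //.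
  move: hi; rewrite leq_divRL // => hi.
  nia.
have hle : ((p.-1 %/ M).+1 <= ((2 * p).-1 %/ M).+1)%N.
  by rewrite ltnS leq_div2r // ; lia.
rewrite -(subnKC hle) iotaD big_cat /= add0n.
rewrite [X in _ + X]big1_seq ?addr0 //.
move=> i /andP[_]; rewrite mem_iota => /andP[hi _].
rewrite /hc HD_coef_big // ?mulr0n ?mul0r ?mulr0 //.
by rewrite -ltn_divLR.
Qed.

Lemma HDk_iota (k : fieldType) P M (x : k) :
  HDk P M x = \sum_(i <- iota 0 (P %/ M).+1) hc k P M i * x ^+ (i * M).
Proof.
have -> : iota 0 (P %/ M).+1 = index_iota 0 (P %/ M).+1 by rewrite /index_iota subn0.
by rewrite big_mkord /HDk /hc.
Qed.

Lemma HDW1 (k : fieldType) p P M (x : W2 k) :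
  (@HDW k p P M x).1 = HDk P M x.1.
Proof.
rewrite /HDW foldr_fst big_map HDk_iota; apply: eq_bigr => i _.
exact: (@term1 k p P M x i).
Qed.

Lemma HDW2 (k : fieldType) p (hchar : p \in [pchar k]) P M (x y : W2 k) : x.1 = y.1 ->
  (@HDW k p P M x).2 - (@HDW k p P M y).2 =
  (\sum_(i <- iota 0 (P %/ M).+1) hc k P M i * ((i * M)%:R * x.1 ^+ (i * M).-1)) ^+ p
  * (x.2 - y.2).
Proof.
move=> hxy.
have := @foldr_rel k p nat (@term k p P M x) (@term k p P M y) (iota 0 (P %/ M).+1).
rewrite /HDW => ->; last by move=> i; rewrite !term1 hxy.
rewrite -(pFrobenius_autE hchar) rmorph_sum big_distrl /=.
apply: eq_bigr => i _; rewrite (@term2 k p hchar) // pFrobenius_autE mulrA //.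
Qed.

Theorem corollary3p11 (k : fieldType) (p N : nat)
  (hchar : p \in [pchar k]) (hp : (2 < p)%N) (hperf : perfect_field k p)
  (hN : (2 <= N)%N) (hpN : ~~ (p %| N.+1)%N) (eta : W2 k) :
  HDk (p.-1) N.+1 eta.1 != 0 ->
  @w2unit k p (HDW p (2 * p).-1 N.+1 eta) /\
  (forall (eta' : W2 k) (u u' : W2 k),
     eta'.1 = eta.1 ->
     @w2mul k p (HDW p (2 * p).-1 N.+1 eta) u = @w2one k ->
     @w2mul k p (HDW p (2 * p).-1 N.+1 eta') u' = @w2one k ->
     @w2mul k p (HDW p p.-1 N.+1 eta) u = @w2mul k p (HDW p p.-1 N.+1 eta') u').
Proof.
move=> hG.
have hM3 : (3 <= N.+1)%N by [].
have hMk : (N.+1)%:R != 0 :> k by rewrite -(dvdn_pcharf hchar).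
set G0 := HDk p.-1 N.+1 eta.1.
set H0 := HDk (2 * p).-1 N.+1 eta.1.
have hH : H0 = - (N.+1)%:R * G0.
  by rewrite /H0 /G0 !HDk_iota (@sum_rel k p hchar _ (fun i => eta.1 ^+ (i * N.+1))).
have hH0 : H0 != 0 by rewrite hH mulf_neq0 // oppr_eq0.
split.
  set h := HDW p (2 * p).-1 N.+1 eta.
  have h1 : h.1 = H0 by rewrite /h HDW1.
  exists (H0^-1, - (H0^-1) ^+ p * h.2 * (H0^-1) ^+ p).
  clearbody h; rewrite /w2mul /w2one /= h1 mulfV //; congr (_, _).
  have hv : H0 ^+ p * (H0^-1) ^+ p = 1 by rewrite -exprMn mulfV // expr1n.
  have -> : H0 ^+ p * (- H0^-1 ^+ p * h.2 * H0^-1 ^+ p) + H0^-1 ^+ p * h.2 =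
            (1 - H0 ^+ p * (H0^-1) ^+ p) * (H0^-1 ^+ p * h.2).
    move: (H0 ^+ p) (H0^-1 ^+ p) (h.2) => A B C; ring.
  by rewrite hv subrr mul0r.
move=> eta' [u1 u2] [v1 v2] he hu hv.
set g := HDW p p.-1 N.+1 eta; set g' := HDW p p.-1 N.+1 eta'.
set h := HDW p (2 * p).-1 N.+1 eta in hu *; set h' := HDW p (2 * p).-1 N.+1 eta' in hv *.
have g1 : g.1 = G0 by rewrite /g HDW1.
have g1' : g'.1 = G0 by rewrite /g' HDW1 he.
have h1 : h.1 = H0 by rewrite /h HDW1.
have h1' : h'.1 = H0 by rewrite /h' HDW1 he.
set Eg := \sum_(i <- iota 0 (p.-1 %/ N.+1).+1)
            hc k p.-1 N.+1 i * ((i * N.+1)%:R * eta.1 ^+ (i * N.+1).-1).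
have dg : g.2 - g'.2 = Eg ^+ p * (eta.2 - eta'.2).
  by rewrite /g /g' (@HDW2 k p hchar) // he.
have dh : h.2 - h'.2 = (- (N.+1)%:R * Eg) ^+ p * (eta.2 - eta'.2).
  rewrite /h /h' (@HDW2 k p hchar) // ?he //.
  by rewrite (@sum_rel k p hchar _ (fun i => (i * N.+1)%:R * eta.1 ^+ (i * N.+1).-1)).
clearbody g g' h h'.
move: hu hv; rewrite /w2mul /w2one /= h1 h1' => -[hu1 hu2] [hv1 hv2].
have e1 : u1 = v1 by apply: (mulfI hH0); rewrite hu1 hv1.
subst v1.
rewrite /w2mul /= g1 g1'; congr (_, _).
apply/eqP; rewrite -subr_eq0.
have hp0 : H0 ^+ p != 0 by rewrite expf_neq0.
rewrite -(mulIr_eq0 _ (mulIf hp0)) /=.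
have -> : (G0 ^+ p * u2 + u1 ^+ p * g.2 - (G0 ^+ p * v2 + u1 ^+ p * g'.2)) * H0 ^+ p
   = G0 ^+ p * (H0 ^+ p * u2 + u1 ^+ p * h.2) - G0 ^+ p * (H0 ^+ p * v2 + u1 ^+ p * h'.2)
     - G0 ^+ p * u1 ^+ p * (h.2 - h'.2) + H0 ^+ p * u1 ^+ p * (g.2 - g'.2).
  move: (G0 ^+ p) (H0 ^+ p) (u1 ^+ p) (g.2) (g'.2) (h.2) (h'.2) => A B C D E F G; ring.
rewrite hu2 hv2 dg dh hH !exprMn !mulr0 subrr.
move: (_ ^+ p) (G0 ^+ p) (u1 ^+ p) (Eg ^+ p) (eta.2 - eta'.2) => A B C D E; apply/eqP; ring.
Qed.
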